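(* Assume (A1) and let $\alpha\in\mathbb R$. Let $\mathsf M$ be a convex subset of $\mathcal M_1(\mathsf T)$ and let $\zeta_1,\zeta_2\in\mathsf M$ satisfy $\Psi_\alpha(\zeta_1)=\Psi_\alpha(\zeta_2)=\inf_{\zeta\in\mathsf M}\Psi_\alpha(\zeta)<\infty$. Then $\zeta_1K=\zeta_2K$.
   Context: Let $(\mathsf Y,\mathcal Y,\nu)$ be a measure space with $\nu$ $\sigma$-finite, $(\mathsf T,\mathcal T)$ a measurable space and $\mathcal M_1(\mathsf T)$ its probability measures. Let $k:\mathsf T\times\mathsf Y\to[0,\infty)$ be measurable with $\int k(\theta,y)\nu(dy)=1$, $K(\theta,A)=\int_Ak(\theta,y)\nu(dy)$, $\zeta K(A)=\int\zeta(d\theta)K(\theta,A)$, and $\zeta k(y)=\int\zeta(d\theta)k(\theta,y)$. Let $p$ be measurable positive on $\mathsf Y$. $f_0(u)=u-1-\log u$, $f_1(u)=1-u+u\log u$, $f_\alpha(u)=\frac{1}{\alpha(\alpha-1)}[u^\alpha-1-\alpha(u-1)]$ otherwise; $\Psi_\alpha(\zeta)=\int_{\mathsf Y}f_\alpha(\zeta k(y)/p(y))p(y)\nu(dy)$. Assumption (A1): $k>0$, $p>0$ everywhere and $\int p\,d\nu<\infty$. *)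

(* Defs.v *)
From HB Require Import structures.
From mathcomp Require Import all_boot all_order all_algebra.
From mathcomp Require Import all_classical all_reals all_analysis.
Set Implicit Arguments. Unset Strict Implicit. Unset Printing Implicit Defensive.
Import Order.TTheory GRing.Theory Num.Theory.
Import numFieldNormedType.Exports.
Local Open Scope classical_set_scope.
Local Open Scope ring_scope.

Section Defs.
Context {R : realType} {dT dY : measure_display}
        {T : measurableType dT} {Y : measurableType dY}.

Definition Kker (nu : {measure set Y -> \bar R}) (k : T -> Y -> R)
  (theta : T) (A : set Y) : \bar R :=
  (\int[nu]_(y in A) (k theta y)%:E)%E.

Definition zetaK (nu : {measure set Y -> \bar R}) (k : T -> Y -> R)
  (zeta : probability T R) (A : set Y) : \bar R :=
  (\int[zeta]_theta Kker nu k theta A)%E.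

(* zeta k (y) = \int zeta(dtheta) k(theta, y); real-valued via [fine]
   (it is finite nu-a.e.) *)
Definition zetak (k : T -> Y -> R) (zeta : probability T R) (y : Y) : R :=
  fine (\int[zeta]_theta (k theta y)%:E)%E.

End Defs.

(* the f_alpha divergence generators, used on u > 0 *)
Definition f_alpha {R : realType} (alpha u : R) : R :=
  if alpha == 0 then u - 1 - ln u
  else if alpha == 1 then 1 - u + u * ln u
  else (u `^ alpha - 1 - alpha * (u - 1)) / (alpha * (alpha - 1)).

Definition Psi_alpha {R : realType} {dT dY : measure_display}
  {T : measurableType dT} {Y : measurableType dY}
  (nu : {measure set Y -> \bar R}) (k : T -> Y -> R) (p : Y -> R)
  (alpha : R) (zeta : probability T R) : \bar R :=
  (\int[nu]_y (f_alpha alpha (zetak k zeta y / p y) * p y)%:E)%E.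

Definition convex_probs {R : realType} {dT : measure_display}
  {T : measurableType dT} (M : set (probability T R)) : Prop :=
  forall z1 z2 : probability T R, M z1 -> M z2 ->
  forall t : R, 0 <= t <= 1 ->
  exists z : probability T R, M z /\
    forall A : set T, measurable A ->
      z A = (t%:E * z1 A + (1 - t)%:E * z2 A)%E.

(* Main.v *)
Require Import Defs.
From HB Require Import structures.
From mathcomp Require Import all_boot all_order all_algebra.
From mathcomp Require Import all_classical all_reals all_analysis.
Import Order.TTheory GRing.Theory Num.Theory.
Import numFieldNormedType.Exports.
Local Open Scope classical_set_scope.
Local Open Scope ring_scope.
From mathcomp Require Import measurable_realfun.
From mathcomp Require Import ring lra.
Section RealFacts.
Variable R : realType.
Implicit Types x y u v a l : R.

Lemma powR_pos x a : 0 < x -> x `^ a = expR (a * ln x).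
Proof. by move=> x0; rewrite /powR gt_eqF. Qed.

Lemma expR_tangent c x : x != c -> expR c * (1 + (x - c)) < expR x.
Proof.
move=> xc; have -> : expR x = expR c * expR (x - c) by rewrite -expRD addrC subrK.
by rewrite ltr_pM2l ?expR_gt0// expR_gt1Dx// subr_eq0.
Qed.

Lemma wamgm (p q : R) l : 0 < p -> 0 < q -> 0 < l < 1 -> p != q ->
  p `^ l * q `^ (1 - l) < l * p + (1 - l) * q.
Proof.
move=> p0 q0 /andP[l0 l1] pq.
rewrite !powR_pos// -expRD.
set c := _ + _.
have lnpq : ln p != ln q.
  by apply: contra pq => /eqP h; apply/eqP; apply: ln_inj => //; rewrite posrE.
have hp : ln p != c.
  rewrite /c; apply: contra lnpq => /eqP h.
  have : (1 - l) * (ln p - ln q) == 0 by apply/eqP; rewrite mulrBr; lra.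
  by rewrite mulf_eq0 subr_eq0 => /orP[/eqP h1|//]; lra.
have hq : ln q != c.
  rewrite /c; apply: contra lnpq => /eqP h.
  have : l * (ln p - ln q) == 0 by apply/eqP; rewrite mulrBr; lra.
  by rewrite mulf_eq0 subr_eq0 => /orP[/eqP h1|//]; lra.
have Hp := @expR_tangent c (ln p) hp; have Hq := @expR_tangent c (ln q) hq.
rewrite !lnK ?posrE// in Hp Hq.
have ec := expR_gt0 c.
have e : expR c = l * (expR c * (1 + (ln p - c))) + (1 - l) * (expR c * (1 + (ln q - c))).
  rewrite /c; ring.
rewrite [X in X < _]e.
have l1' : 0 < 1 - l by lra.
have H1 := Hp; rewrite -(ltr_pM2l l0) in H1.
have H2 := Hq; rewrite -(ltr_pM2l l1') in H2.
lra.
Qed.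

Definition Bern a x := x `^ a - 1 - a * (x - 1).

Lemma Bern_strict a x : a != 0 -> a != 1 -> 0 < x -> x != 1 ->
  0 < a * (a - 1) * Bern a x.
Proof.
move=> a0 a1 x0 x1; rewrite /Bern.
have xa0 : 0 < x `^ a by rewrite powR_gt0.
have xa1 : x `^ a != 1.
  by rewrite powR_eq1 negb_or x1 negb_or -leNgt (ltW x0) a0.
have [a_gt1|a_le1] := ltP 1 a.
  have := @wamgm (x `^ a) 1 (a^-1) xa0 ltr01.
  rewrite -powRrM mulfV// powRr1 ?(ltW x0)// powR1 mulr1.
  have ai : 0 < a^-1 < 1 by rewrite invr_gt0 invf_lt1; lra.
  move=> /(_ ai xa1) H.
  have H2 := H; rewrite -(ltr_pM2l (lt_trans ltr01 a_gt1)) in H2; move: H2.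
  rewrite mulrDr mulrA mulfV ?gt_eqF ?(lt_trans ltr01 a_gt1)// mul1r => H2.
  have : 0 < x `^ a - 1 - a * (x - 1).
    move: H2; rewrite mulr1 mulrBr mulr1 mulfV //; lra.
  move=> H3; apply: mulr_gt0 => //; apply: mulr_gt0; lra.
have [a_gt0|a_le0] := ltP 0 a.
  have a_lt1 : a < 1 by rewrite lt_neqAle a1 a_le1.
  have := @wamgm x 1 a x0 ltr01; rewrite powR1 mulr1.
  move=> /(_ (ltac:(apply/andP; split => //)) x1) H.
  have H3 : x `^ a - 1 - a * (x - 1) < 0 by lra.
  rewrite -mulrA; apply: mulr_gt0 => //; nra.
have a_lt0 : a < 0 by rewrite lt_neqAle a0 a_le0.
set l := - a / (1 - a).
have l01 : 0 < l < 1.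
  rewrite /l; apply/andP; split.
    by apply: divr_gt0; lra.
  by rewrite ltr_pdivrMr; lra.
have := @wamgm x (x `^ a) l x0 xa0 l01.
have xne : x != x `^ a.
  apply: contra x1 => /eqP h.
  have : x `^ (1 - a) == 1.
    rewrite powRB; last by rewrite (gt_eqF x0) implybT.
    by rewrite powRr1 ?(ltW x0)// -h divff// gt_eqF.
  rewrite powR_eq1 => /or3P[//|xn|/eqP h2]; [by move: xn; rewrite ltNge (ltW x0)|lra].
move=> /(_ xne).
have e : x `^ l * (x `^ a) `^ (1 - l) = 1.
  rewrite -powRrM -powRD; last by rewrite (gt_eqF x0) implybT.
  suff -> : l + a * (1 - l) = 0 by rewrite powRr0.
  rewrite /l; field; lra.
rewrite e => H.
have oma : 0 < 1 - a by lra.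
have H2 := H; rewrite -(ltr_pM2l oma) in H2; move: H2.
have -> : (1 - a) * (l * x + (1 - l) * x `^ a) = - a * x + x `^ a.
  rewrite /l; field; lra.
move=> H2; have H3 : 0 < x `^ a - 1 - a * (x - 1) by lra.
apply: mulr_gt0 => //; nra.
Qed.

Lemma Bern1 a : Bern a 1 = 0.
Proof. rewrite /Bern powR1; lra. Qed.

Lemma Bern_ge a x : 0 < x -> 0 <= a * (a - 1) * Bern a x.
Proof.
move=> x0; have [->|a0] := eqVneq a 0; first by rewrite !mul0r.
have [->|a1] := eqVneq a 1; first by rewrite subrr mulr0 mul0r.
have [->|x1] := eqVneq x 1; first by rewrite Bern1 mulr0.
exact/ltW/Bern_strict.
Qed.

Lemma ln_lt x : 0 < x -> x != 1 -> ln x < x - 1.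
Proof.
move=> x0 x1; have : ln x != 0 by rewrite ln_eq0.
move=> /expR_gt1Dx; rewrite lnK ?posrE//; lra.
Qed.

Lemma ln_le x : 0 < x -> ln x <= x - 1.
Proof.
move=> x0; have [->|x1] := eqVneq x 1; first by rewrite ln1 subrr.
exact/ltW/ln_lt.
Qed.

Lemma xlnx_lt x : 0 < x -> x != 1 -> x - 1 < x * ln x.
Proof.
move=> x0 x1; have xi0 : 0 < x^-1 by rewrite invr_gt0.
have := @ln_lt (x^-1) xi0; rewrite invr_eq1 => /(_ x1).
rewrite lnV ?posrE// => H.
have H2 := H; rewrite -(ltr_pM2l x0) in H2.
move: H2; rewrite mulrBr mulfV ?gt_eqF// mulr1 mulrN; lra.
Qed.

Lemma xlnx_le x : 0 < x -> x - 1 <= x * ln x.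
Proof.
move=> x0; have [->|x1] := eqVneq x 1; first by rewrite ln1 subrr mulr0.
exact/ltW/xlnx_lt.
Qed.

Lemma f_alpha_ge0 a u : 0 < u -> 0 <= f_alpha a u.
Proof.
move=> u0; rewrite /f_alpha.
have [a0|a0] := eqVneq a 0; first by have := @ln_le u u0; lra.
have [a1|a1] := eqVneq a 1; first by have := @xlnx_le u u0; lra.
have D0 : a * (a - 1) != 0 by rewrite mulf_eq0 negb_or a0 subr_eq0.
have := @Bern_ge a u u0; rewrite /Bern => H.
have -> : (u `^ a - 1 - a * (u - 1)) / (a * (a - 1)) =
  (a * (a - 1) * (u `^ a - 1 - a * (u - 1))) / (a * (a - 1)) ^+ 2.
  by rewrite expr2; field; rewrite subr_eq0 a1 a0.
by apply: divr_ge0; [exact: H | exact: sqr_ge0].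
Qed.

Lemma f_alpha_mid a u v : 0 < u -> 0 < v -> u != v ->
  2 * f_alpha a ((u + v) / 2) < f_alpha a u + f_alpha a v.
Proof.
move=> u0 v0 uv; set m := (u + v) / 2.
have m0 : 0 < m by rewrite /m; lra.
set r := u / m; set s := v / m.
have r0 : 0 < r by apply: divr_gt0.
have s0 : 0 < s by apply: divr_gt0.
have ur : u = m * r by rewrite /r mulrC divfK ?gt_eqF.
have vs : v = m * s by rewrite /s mulrC divfK ?gt_eqF.
have rs : r + s = 2.
  by rewrite /r /s /m; field; rewrite gt_eqF //; lra.
have r1 : r != 1.
  apply/negP => /eqP r1; move: uv; rewrite ur vs r1.
  have -> : s = 1 by lra.
  by rewrite eqxx.
have s1 : s != 1.
  apply/negP => /eqP s1; move: r1; have -> : r = 1 by lra.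
  by rewrite eqxx.
rewrite /f_alpha.
have [a0|a0] := eqVneq a 0.
  have lu : ln u = ln m + ln r by rewrite ur lnM ?posrE.
  have lv : ln v = ln m + ln s by rewrite vs lnM ?posrE.
  have := @ln_lt r r0 r1; have := @ln_lt s s0 s1.
  have : u + v = 2 * m by rewrite /m; field.
  lra.
have [a1|a1] := eqVneq a 1.
  have lu : ln u = ln m + ln r by rewrite ur lnM ?posrE.
  have lv : ln v = ln m + ln s by rewrite vs lnM ?posrE.
  have H1 := @xlnx_lt r r0 r1; have H2 := @xlnx_lt s s0 s1.
  have e : u * ln u + v * ln v - 2 * (m * ln m) = m * (r * ln r + s * ln s).
    rewrite lu lv ur vs; have -> : s = 2 - r by lra.
    ring.
  have : 0 < m * (r * ln r + s * ln s) by apply: mulr_gt0 => //; lra.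
  have : u + v = 2 * m by rewrite /m; field.
  lra.
have D0 : a * (a - 1) != 0 by rewrite mulf_eq0 negb_or a0 subr_eq0.
have Hr := @Bern_strict a r a0 a1 r0 r1; have Hs := @Bern_strict a s a0 a1 s0 s1.
move: Hr Hs; rewrite /Bern.
have pu : u `^ a = m `^ a * r `^ a by rewrite ur powRM ?ltW.
have pv : v `^ a = m `^ a * s `^ a by rewrite vs powRM ?ltW.
rewrite pu pv.
have M0 : 0 < m `^ a by apply: powR_gt0.
move: M0; set M := m `^ a; set P := r `^ a; set Q := s `^ a; set D := a * (a - 1).
move=> M0 Hr Hs.
have H : (M * P - 1 - a * (u - 1)) / D + (M * Q - 1 - a * (v - 1)) / D -
    2 * ((M - 1 - a * (m - 1)) / D) =
    M * (D * (P - 1 - a * (r - 1)) + D * (Q - 1 - a * (s - 1))) / D ^+ 2.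
  rewrite ur vs /D; have -> : s = 2 - r by lra.
  by rewrite expr2; field; rewrite subr_eq0 a1 a0.
rewrite -subr_gt0 H; apply: divr_gt0; last by rewrite lt0r sqrf_eq0 D0 sqr_ge0.
by apply: mulr_gt0 => //; lra.
Qed.
End RealFacts.

Definition half_nng (R : realType) : {nonneg R} := (2^-1)%:nng.
Section Main.
Context (R : realType) (dY dT : measure_display)
  (Y : measurableType dY) (T : measurableType dT)
  (nu : {measure set Y -> \bar R}) (nu_sfin : sigma_finite setT nu)
  (k : T -> Y -> R)
  (k_meas : measurable_fun setT (fun q : T * Y => k q.1 q.2))
  (k_pos : forall theta y, 0 < k theta y)
  (k_norm : forall theta, (\int[nu]_y (k theta y)%:E)%E = 1%E).

Definition nuS : set Y -> \bar R := nu.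
HB.instance Definition _ := Measure.on nuS.
HB.instance Definition _ := Measure_isSigmaFinite.Build _ _ _ nuS nu_sfin.

Local Open Scope ereal_scope.

Definition kE (q : (T * Y)%type) : \bar R := (k q.1 q.2)%:E.
Lemma mkE : measurable_fun setT kE.
Proof. exact/measurable_EFinP. Qed.
Lemma kE0 q : 0 <= kE q.
Proof. by rewrite lee_fin ltW. Qed.

Definition G (z : probability T R) (y : Y) := \int[z]_th (k th y)%:E.

Lemma mG z : measurable_fun setT (G z).
Proof. exact: (@measurable_fun_fubini_tonelli_G _ _ _ _ _ z kE mkE kE0). Qed.

Lemma G_ge0 z y : 0 <= G z y.
Proof. by apply: integral_ge0 => th _; rewrite lee_fin ltW. Qed.

Lemma intG z : \int[nu]_y G z y = 1.
Proof.
have := @fubini_tonelli _ _ _ _ _ z nuS kE mkE kE0.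
rewrite /kE /= => <-.
under eq_integral do rewrite k_norm.
by rewrite integral_cst// mul1e; exact: probability_setT.
Qed.

Lemma G_fin z : {ae nu, forall y, G z y \is a fin_num}.
Proof.
have : nu.-integrable setT (G z).
  apply/integrableP; split; first exact: mG.
  under eq_integral do rewrite gee0_abs ?G_ge0//.
  by rewrite intG ltey.
move=> /(integrable_ae measurableT); apply: filterS => y; exact.
Qed.


Lemma G_gt0 z y : 0 < G z y.
Proof.
rewrite lt0e G_ge0 andbT; apply/negP => /eqP H0.
have mf : measurable_fun setT (fun th => (k th y)%:E).
  by apply/measurable_EFinP; exact: (measurable_fun_pair1 y k_meas).
have : \int[z]_th `|(k th y)%:E| = 0.
  by rewrite -H0; apply: eq_integral => th _; rewrite gee0_abs// lee_fin ltW.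
move=> /(ae_eq_integral_abs z measurableT mf).
rewrite /ae_eq /almost_everywhere.
move=> [N [mN N0 sub]].
have : z.-negligible [set: T].
  exists N; split => // x _; apply: sub => /= /(_ I) /eqP.
  by rewrite eqe gt_eqF.
move/(measure_negligible measurableT).
move=> H; have H1 := probability_setT z.
have : (1 : \bar R) = 0 by rewrite -H1; exact: H.
by move/eqP; rewrite onee_eq0.
Qed.

Lemma zetaK_eq z A : measurable A -> zetaK nu k z A = \int[nu]_(y in A) G z y.
Proof.
move=> mA; rewrite /zetaK.
pose kA (q : (T * Y)%type) := ((fun y => (k q.1 y)%:E) \_ A) q.2.
have kAE q : kA q = (k q.1 q.2 * \1_A q.2)%:E.
  rewrite /kA patchE indicE; case: ifP => _; by rewrite ?mulr1 ?mulr0.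
have mkA : measurable_fun setT kA.
  rewrite (_ : kA = fun q => (k q.1 q.2 * \1_A q.2)%:E); last exact/funext.
  apply/measurable_EFinP; apply: measurable_funM => //.
  by apply: measurableT_comp; [exact: measurable_indic | exact: measurable_snd].
have kA0 q : 0 <= kA q by rewrite kAE lee_fin mulr_ge0// ?ltW// indicE.
transitivity (\int[z]_th \int[nuS]_y kA (th, y)).
  apply: eq_integral => th _; rewrite /Kker integral_mkcond.
  by apply: eq_integral => y _; rewrite /kA.
rewrite (@fubini_tonelli _ _ _ _ _ z nuS kA mkA kA0) /kA /=.
rewrite integral_mkcond; apply: eq_integral => y _.
rewrite /G patchE; case: ifPn => yA.
  by apply: eq_integral => x _; rewrite patchE yA.
transitivity (\int[z]_x (cst 0 x)); last exact: integral0.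
by apply: eq_integral => x _; rewrite patchE (negbTE yA).
Qed.


Lemma G_mix {z z1 z2 : probability T R} :
  (forall A, measurable A -> z A = ((2^-1)%:E * z1 A + (1 - 2^-1)%:E * z2 A)) ->
  forall y, G z y = (2^-1)%:E * G z1 y + (2^-1)%:E * G z2 y.
Proof.
move=> zE y.
pose h := half_nng R.
pose mix := measure_add (mscale h z1) (mscale h z2).
have mf : measurable_fun setT (fun th => (k th y)%:E).
  by apply/measurable_EFinP; exact: (measurable_fun_pair1 y k_meas).
have f0 th : [set: T] th -> 0 <= (k th y)%:E by move=> _; rewrite lee_fin ltW.
rewrite /G (eq_measure_integral mix); last first.
  move=> A mA _.
  transitivity (mscale h z1 A + mscale h z2 A); last first.
    exact: (esym (measure_addE _ _ A)).
  rewrite /mscale /= zE//.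
  have -> : (1 - 2^-1 : R)%R = (2^-1)%R by field.
  by [].
rewrite ge0_integral_measure_add// !ge0_integral_mscale//.
Qed.


Local Open Scope ring_scope.
Lemma mF (a : R) : measurable_fun setT (f_alpha a).
Proof.
have [a0|a0] := eqVneq a 0.
  rewrite (_ : f_alpha a = fun u => u - 1 - ln u); last first.
    by apply/funext => u; rewrite /f_alpha a0 eqxx.
  by apply: measurable_funB; [apply: measurable_funB|exact: measurable_ln].
have [a1|a1] := eqVneq a 1.
  rewrite (_ : f_alpha a = fun u => 1 - u + u * ln u); last first.
    by apply/funext => u; rewrite /f_alpha a1 eqxx oner_eq0.
  apply: measurable_funD; first by apply: measurable_funB.
  by apply: measurable_funM => //; exact: measurable_ln.
rewrite (_ : f_alpha a = fun u => (u `^ a - 1 - a * (u - 1)) / (a * (a - 1))); last first.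
  by apply/funext => u; rewrite /f_alpha (negbTE a0) (negbTE a1).
apply: measurable_funM => //.
apply: measurable_funB => //; last first.
  by apply: measurable_funM => //; apply: measurable_funB.
by apply: measurable_funB => //; exact: measurable_powR.
Qed.

Context (p : Y -> R) (p_meas : measurable_fun setT p)
  (p_pos : forall y, 0 < p y) (alpha : R).

Definition Phi (z : probability T R) (y : Y) : R :=
  f_alpha alpha (zetak k z y / p y) * p y.

Lemma mPhi z : measurable_fun setT (Phi z).
Proof.
apply: measurable_funM => //.
apply: measurableT_comp; first exact: mF.
apply: measurable_funM.
  by apply: measurableT_comp => //; exact: mG.
rewrite (_ : (fun y => (p y)^-1) = (fun y => (p y) `^ (-1))); last first.
  by apply/funext => y; rewrite powR_inv1// ltW.
exact: (measurableT_comp (@measurable_powR R (-1)) p_meas).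
Qed.

Definition Dset (z1 z2 : probability T R) : set Y :=
  [set y | G z1 y \is a fin_num] `&` [set y | G z2 y \is a fin_num].

Lemma mDset z1 z2 : measurable (Dset z1 z2).
Proof.
apply: measurableI.
  by rewrite -[X in measurable X]setTI; apply: emeasurable_fin_num => //; exact: mG.
by rewrite -[X in measurable X]setTI; apply: emeasurable_fin_num => //; exact: mG.
Qed.

Lemma aeD z1 z2 : {ae nu, forall y, Dset z1 z2 y}.
Proof. by apply: filterS2 (G_fin z1) (G_fin z2) => y. Qed.

Lemma Psi_on (z : probability T R) {D : set Y} : measurable D ->
  {ae nu, forall y, D y} ->
  Psi_alpha nu k p alpha z = (\int[nu]_(y in D) (Phi z y)%:E)%E.
Proof.
move=> mD aeD; rewrite integral_mkcond.
apply: ae_eq_integral => //.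
- exact/measurable_EFinP/mPhi.
- apply/(measurable_restrictT _ mD).
  exact/measurable_funTS/measurable_EFinP/mPhi.
- by apply: filterS aeD => y Dy _; rewrite patchE mem_set.
Qed.

Lemma zetakE {z y} : G z y \is a fin_num -> G z y = (zetak k z y)%:E.
Proof. by move=> h; rewrite /zetak fineK. Qed.

Lemma zetak_gt0 {z y} : G z y \is a fin_num -> 0 < zetak k z y.
Proof. by move=> h; rewrite -lte_fin -zetakE// G_gt0. Qed.

Lemma pw {z1 z2 z : probability T R} {y} :
  (forall y, G z y = ((2^-1)%:E * G z1 y + (2^-1)%:E * G z2 y)%E) ->
  Dset z1 z2 y ->
  [/\ 0 <= Phi z1 y, 0 <= Phi z2 y, 0 <= Phi z y,
      Phi z y <= 2^-1 * Phi z1 y + 2^-1 * Phi z2 y &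
      (Phi z y = 2^-1 * Phi z1 y + 2^-1 * Phi z2 y -> G z1 y = G z2 y)].
Proof.
move=> Gz [/= f1 f2].
have g10 := zetak_gt0 f1; have g20 := zetak_gt0 f2.
have gz : zetak k z y = 2^-1 * zetak k z1 y + 2^-1 * zetak k z2 y.
  by rewrite (_ : zetak k z y = fine (G z y)) // Gz (zetakE f1) (zetakE f2) -!EFinM -EFinD.
have py := p_pos y.
set u := zetak k z1 y / p y; set v := zetak k z2 y / p y.
have u0 : 0 < u by apply: divr_gt0.
have v0 : 0 < v by apply: divr_gt0.
have wz : zetak k z y / p y = (u + v) / 2.
  by rewrite gz /u /v; field; rewrite gt_eqF.
have m0 : 0 < (u + v) / 2 by apply: divr_gt0 => //; apply: addr_gt0.
rewrite /Phi wz -/u -/v.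
have Fu := @f_alpha_ge0 R alpha u u0; have Fv := @f_alpha_ge0 R alpha v v0.
have Fm := @f_alpha_ge0 R alpha _ m0.
split.
- exact: mulr_ge0 (ltW py).
- exact: mulr_ge0 (ltW py).
- exact: mulr_ge0 (ltW py).
- have [->|uv] := eqVneq u v.
    have -> : (v + v) / 2 = v by field.
    have -> : 2^-1 * (f_alpha alpha v * p y) + 2^-1 * (f_alpha alpha v * p y) = f_alpha alpha v * p y by field.
    by [].
  have := @f_alpha_mid R alpha u v u0 v0 uv => H.
  have H2 := H; rewrite -(ltr_pM2r py) in H2.
  apply: ltW; move: H2; rewrite mulrDl; nra.
- move=> E; have [uv|uv] := eqVneq u v.
    rewrite (zetakE f1) (zetakE f2); congr EFin.
    by move: uv; rewrite /u /v => /(congr1 (fun x => x * p y)); rewrite !divfK ?gt_eqF.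
  have := @f_alpha_mid R alpha u v u0 v0 uv => H.
  have H2 := H; rewrite -(ltr_pM2r py) in H2.
  exfalso; move: H2 E; rewrite mulrDl; nra.
Qed.

Local Open Scope ereal_scope.

Lemma key {z1 z2 z : probability T R} {I : \bar R} :
  (forall A, measurable A -> z A = ((2^-1)%:E * z1 A + (1 - 2^-1)%:E * z2 A)) ->
  Psi_alpha nu k p alpha z1 = I -> Psi_alpha nu k p alpha z2 = I -> I < +oo ->
  I <= Psi_alpha nu k p alpha z ->
  {ae nu, forall y, G z1 y = G z2 y}.
Proof.
move=> zE H1 H2 Ifin Iz.
have Gz := G_mix zE.
pose D := Dset z1 z2.
have mD : measurable D := mDset z1 z2.
have aD : {ae nu, forall y, D y} := aeD z1 z2.
rewrite (Psi_on z1 mD aD) in H1.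
rewrite (Psi_on z2 mD aD) in H2.
rewrite (Psi_on z mD aD) in Iz.
pose Hr y := (2^-1 * Phi z1 y + 2^-1 * Phi z2 y - Phi z y)%R.
have mP z' : measurable_fun D (fun y => (Phi z' y)%:E).
  exact/measurable_funTS/measurable_EFinP/mPhi.
have mHr : measurable_fun D (fun y => (Hr y)%:E).
  apply/measurable_funTS/measurable_EFinP; apply: measurable_funB; last exact: mPhi.
  by apply: measurable_funD; apply: measurable_funM => //; exact: mPhi.
have Hr0 y : D y -> 0 <= (Hr y)%:E.
  by move=> Dy; have [_ _ _ h _] := pw Gz Dy; rewrite lee_fin /Hr subr_ge0.
have P10 y : D y -> 0 <= (Phi z1 y)%:E.
  by move=> Dy; have [h _ _ _ _] := pw Gz Dy; rewrite lee_fin.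
have P20 y : D y -> 0 <= (Phi z2 y)%:E.
  by move=> Dy; have [_ h _ _ _] := pw Gz Dy; rewrite lee_fin.
have Pz0 y : D y -> 0 <= (Phi z y)%:E.
  by move=> Dy; have [_ _ h _ _] := pw Gz Dy; rewrite lee_fin.
have Eavg : \int[nu]_(y in D) ((2^-1 * Phi z1 y + 2^-1 * Phi z2 y)%R)%:E =
    (2^-1)%:E * I + (2^-1)%:E * I.
  under eq_integral do rewrite EFinD (EFinM (2^-1)%R) (EFinM (2^-1)%R).
  rewrite ge0_integralD//; last 4 first.
  - by move=> y Dy; rewrite mule_ge0 ?P10.
  - exact: emeasurable_funM.
  - by move=> y Dy; rewrite mule_ge0 ?P20.
  - exact: emeasurable_funM.
  by rewrite !ge0_integralZl_EFin// H1 H2.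
have Esplit : \int[nu]_(y in D) ((2^-1 * Phi z1 y + 2^-1 * Phi z2 y)%R)%:E =
    \int[nu]_(y in D) (Hr y)%:E + \int[nu]_(y in D) (Phi z y)%:E.
  rewrite -ge0_integralD//; apply: eq_integral => y _; rewrite -EFinD /Hr.
  by congr EFin; ring.
have J0 : 0 <= \int[nu]_(y in D) (Hr y)%:E by apply: integral_ge0.
have K0 : 0 <= \int[nu]_(y in D) (Phi z y)%:E by apply: integral_ge0.
have I0 : 0 <= I by rewrite -H1; apply: integral_ge0.
have If : I \is a fin_num by rewrite ge0_fin_numE.
have arith : forall (J K : \bar R) (r : R), 0 <= J -> 0 <= K -> r%:E <= K ->
    (2^-1)%:E * r%:E + (2^-1)%:E * r%:E = J + K -> J = 0.
  move=> [j| |] [kk| |] r //=; rewrite !lee_fin => J0' K0' rK.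
  rewrite -!EFinM -!EFinD => /eqP; rewrite eqe => /eqP E1.
  by congr EFin; lra.
have HJ : \int[nu]_(y in D) (Hr y)%:E = 0.
  apply: (arith _ (\int[nu]_(y in D) (Phi z y)%:E) (fine I)) => //.
    by rewrite fineK.
  by rewrite -Esplit Eavg fineK.
have : \int[nu]_(y in D) `|(Hr y)%:E| = 0.
  rewrite -HJ; apply: eq_integral => y /[!inE] Dy.
  by rewrite gee0_abs// Hr0.
move/(ae_eq_integral_abs nu mD mHr) => aeH.
apply: filterS2 aD aeH => y Dy /(_ Dy) [] /eqP.
rewrite subr_eq0 => /eqP E.
by have [_ _ _ _ h] := pw Gz Dy; apply: h.
Qed.

Lemma final (M : set (probability T R)) (M_convex : convex_probs M)
  (zeta1 zeta2 : probability T R) (M1 : M zeta1) (M2 : M zeta2)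
  (H1 : Psi_alpha nu k p alpha zeta1 = ereal_inf [set Psi_alpha nu k p alpha z | z in M])
  (H2 : Psi_alpha nu k p alpha zeta2 = ereal_inf [set Psi_alpha nu k p alpha z | z in M])
  (Hfin : (ereal_inf [set Psi_alpha nu k p alpha z | z in M] < +oo)%E) :
  forall A : set Y, measurable A -> zetaK nu k zeta1 A = zetaK nu k zeta2 A.
Proof.
move=> A mA.
have h01 : (0 <= (2^-1 : R) <= 1)%R.
  by apply/andP; split; [rewrite invr_ge0 ler0n | rewrite invf_le1 ?ler1n].
have [z [Mz zE]] := M_convex zeta1 zeta2 M1 M2 (2^-1)%R h01.
have Iz : ereal_inf [set Psi_alpha nu k p alpha z | z in M] <= Psi_alpha nu k p alpha z.
  by apply: ereal_inf_lbound; exists z.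
have ae := key zE H1 H2 Hfin Iz.
rewrite (zetaK_eq _ _ mA) (zetaK_eq _ _ mA).
apply: ae_eq_integral => //.
- exact/measurable_funTS/mG.
- exact/measurable_funTS/mG.
- by apply: filterS ae => y ->.
Qed.

End Main.

Theorem mainTheorem5 (R : realType) (dY dT : measure_display)
  (Y : measurableType dY) (T : measurableType dT)
  (nu : {measure set Y -> \bar R}) (nu_sfin : sigma_finite setT nu)
  (k : T -> Y -> R)
  (k_meas : measurable_fun setT (fun q : T * Y => k q.1 q.2))
  (k_pos : forall theta y, 0 < k theta y)
  (k_norm : forall theta, (\int[nu]_y (k theta y)%:E)%E = 1%E)
  (p : Y -> R) (p_meas : measurable_fun setT p)
  (p_pos : forall y, 0 < p y)
  (p_int : (\int[nu]_y (p y)%:E < +oo)%E)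
  (alpha : R)
  (M : set (probability T R)) (M_convex : convex_probs M)
  (zeta1 zeta2 : probability T R) (M1 : M zeta1) (M2 : M zeta2)
  (H1 : Psi_alpha nu k p alpha zeta1 = ereal_inf [set Psi_alpha nu k p alpha z | z in M])
  (H2 : Psi_alpha nu k p alpha zeta2 = ereal_inf [set Psi_alpha nu k p alpha z | z in M])
  (Hfin : (ereal_inf [set Psi_alpha nu k p alpha z | z in M] < +oo)%E) :
  forall A : set Y, measurable A -> zetaK nu k zeta1 A = zetaK nu k zeta2 A.
Proof.
exact (@final _ _ _ _ _ _ nu_sfin _ k_meas k_pos k_norm _ p_meas p_pos alpha _ M_convex _ _ M1 M2 H1 H2 Hfin).
Qed.
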